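(* Let $u\in L_{\mathrm{up}}$ and $(\ell_1,\ell_2)\in A_u$, and let $e\in E$ be the last edge of the path in $G$ from $r$ to $\mathrm{apex}(\ell_2)$. Then $e\in P_u$.
   Context: Let $(G=(V,E),L,w)$ be a WTAP instance (spanning tree $G$, links $L\subseteq\binom V2$, weights $w>0$) with a fixed root $r\in V$, and let $F\subseteq L$ be a WTAP solution, i.e. $\bigcup_{\ell\in F}P_\ell=E$, where $P_\ell$ is the edge set of the tree path between the endpoints of $\ell$ and $V_\ell$ its vertex set. Ancestors of $v$ are the vertices on the $r$-$v$ path in $G$ (including $r$ and $v$); descendants are defined reciprocally. $\mathrm{apex}(\ell)$ is the vertex of $V_\ell$ closest to $r$. An up-link is a link $\{t,b\}$ with $t$ an ancestor of $b$; $L_{\mathrm{up}}$ is the set of up-links. For $v\in V$ let $B_v=\{\ell\in F\colon\mathrm{apex}(\ell)\text{ is a descendant of }v\}$. For an up-link $u=\{t,b\}$ with $t$ an ancestor of $b$, let $v_u$ be the ancestor of $t$ farthest from $r$ such that $P_u\subseteq\bigcup_{\ell\in B_{v_u}}P_\ell$, and fix $F_u\subseteq B_{v_u}$ inclusion-wise minimal with $P_u\subseteq\bigcup_{\ell\in F_u}P_\ell$. For $\ell\in F_u$ let $P_{u,\ell}=P_u\setminus\bigcup_{\bar\ell\in F_u\setminus\{\ell\}}P_{\bar\ell}$; these sets are nonempty, pairwise disjoint, and each is the edge set of a path. Define $\ell_1\prec_u\ell_2$ iff the edges of $P_{u,\ell_1}$ appear before those of $P_{u,\ell_2}$ on the $t$-$b$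 path in $G$. If $\ell_1\prec_u\cdots\prec_u\ell_q$ are the links of $F_u$, let $A_u=\{(\ell_i,\ell_{i+1})\colon i=1,\dots,q-1\}$. *)

(* Defs.v *)
From mathcomp Require Import all_boot all_order all_algebra.
Set Implicit Arguments. Unset Strict Implicit. Unset Printing Implicit Defensive.

(* A rooted spanning tree on the finite vertex set V is given by a parent
   map par : V -> V with par r = r and every vertex reaching r by iterating
   par.  Its edges are the pairs {c, par c} for c <> r; we identify such an
   edge with its lower endpoint (the child) c.  A link is a 2-element subset
   of V. *)

Section WTAP.
Variables (V : finType) (par : V -> V) (r : V).

(* a is an ancestor of v (a lies on the r-v path, including r and v). *)
Definition anc (a v : V) : bool := fconnect par v a.

Definition depth (v : V) : nat := #|[set a | anc a v]|.-1.

Definition tree_edges : {set V} := [set c | c != r].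

(* P_l: edges of the tree path between the two endpoints of the link l:
   the edge {c, par c} is on it iff c is an ancestor of exactly one endpoint. *)
Definition Ppath (l : {set V}) : {set V} :=
  [set c | (c != r) && (#|[set x in l | anc c x]| == 1)].

(* apex(l): the vertex of V_l closest to r, i.e. the deepest common ancestor
   of the endpoints of l. *)
Definition is_apex (l : {set V}) (a : V) : bool :=
  [forall x in l, anc a x] &&
  [forall b, [forall x in l, anc b x] ==> anc b a].
Definition apex (l : {set V}) : V := odflt r [pick a | is_apex l a].

Definition is_uplink (l : {set V}) : bool :=
  [exists t in l, [forall x in l, anc t x]].

Definition Bset (F : {set {set V}}) (v : V) : {set {set V}} :=
  [set l in F | anc v (apex l)].

Definition covers (S : {set {set V}}) (P : {set V}) : bool :=
  P \subset \bigcup_(l in S) Ppath l.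

Definition is_vu (F : {set {set V}}) (u : {set V}) (v : V) : Prop :=
  anc v (apex u) /\ covers (Bset F v) (Ppath u) /\
  (forall v', anc v' (apex u) -> covers (Bset F v') (Ppath u) ->
     depth v' <= depth v).

Definition is_Fu (F : {set {set V}}) (u : {set V}) (Fu : {set {set V}}) : Prop :=
  exists2 v, is_vu F u v &
    [/\ Fu \subset Bset F v, covers Fu (Ppath u) &
        forall F' : {set {set V}}, F' \proper Fu -> ~~ covers F' (Ppath u)].

Definition Pul (Fu : {set {set V}}) (u l : {set V}) : {set V} :=
  Ppath u :\: \bigcup_(l' in Fu :\ l) Ppath l'.

(* l1 ≺_u l2: every edge of P_{u,l1} appears before every edge of P_{u,l2}
   on the path from t = apex(u) down to b, i.e. is a strictly higher edge. *)
Definition precu (Fu : {set {set V}}) (u : {set V}) (l1 l2 : {set V}) : bool :=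
  [forall c1 in Pul Fu u l1, forall c2 in Pul Fu u l2,
     (c1 != c2) && anc c1 c2].

Definition in_Au (Fu : {set {set V}}) (u l1 l2 : {set V}) : Prop :=
  exists s : seq {set V},
    [/\ uniq s, [set l in s] = Fu, sorted (precu Fu u) s &
        exists2 i, i.+1 < size s &
          nth set0 s i = l1 /\ nth set0 s i.+1 = l2].

End WTAP.

(* Main.v *)
Require Import Defs.
From mathcomp Require Import all_boot all_order all_algebra.
Set Implicit Arguments. Unset Strict Implicit. Unset Printing Implicit Defensive.

Section H.
Variables (V : finType) (par : V -> V).

Lemma anc_iterE a v : anc par a v -> exists n, iter n par v = a.
Proof. move=> h; exists (findex par v a); exact: iter_findex. Qed.

Lemma anc_iter n v : anc par (iter n par v) v.
Proof. exact: fconnect_iter. Qed.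

Lemma anc_trans a b c : anc par a b -> anc par b c -> anc par a c.
Proof. rewrite /anc => h1 h2; exact: connect_trans h2 h1. Qed.

Lemma anc_refl a : anc par a a.
Proof. exact: connect0. Qed.

Lemma anc_total a c x : anc par a x -> anc par c x -> anc par a c || anc par c a.
Proof.
move=> /anc_iterE [i <-] /anc_iterE [j <-].
case: (leqP i j) => hij.
  by rewrite -(subnK hij) iterD anc_iter orbT.
by rewrite -(subnK (ltnW hij)) iterD anc_iter.
Qed.

Lemma cnt2 (P : pred V) t b : t != b -> #|[set x in [set t; b] | P x]| = P t + P b.
Proof.
move=> tb.
have E : [set x in [set t; b] | P x] = [set x in [set t] | P x] :|: [set x in [set b] | P x].
  by apply/setP => z; rewrite !inE andb_orl.
rewrite E cardsU.
have -> : [set x in [set t] | P x] :&: [set x in [set b] | P x] = set0.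
  apply/setP => z; rewrite !inE; case: (z =P t) => [->|] //=.
  by rewrite (negbTE tb) andbF.
have c1 (c : V) : #|[set x in [set c] | P x]| = P c.
  case Pc: (P c).
    have -> : [set x in [set c] | P x] = [set c] by apply/setP => z; rewrite !inE; case: (z =P c) => [->|].
    by rewrite cards1.
  have -> : [set x in [set c] | P x] = set0 by apply/setP => z; rewrite !inE; case: (z =P c) => [->|].
  by rewrite cards0.
by rewrite !c1 cards0 subn0.
Qed.

Lemma two_elem (u : {set V}) t : #|u| = 2 -> t \in u -> exists b, b != t /\ u = [set t; b].
Proof.
move/eqP/cards2P => [p [q [pq ->]]]; rewrite !inE => /orP [/eqP->|/eqP->].
  by exists q; split => //; rewrite eq_sym.
by exists p; split => //; rewrite setUC.
Qed.

Lemma apex_spec (r : V) x y : (forall v, anc par r v) ->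
  is_apex par [set x; y] (apex par r [set x; y]).
Proof.
move=> hroot; rewrite /apex; case: pickP => [a //|none].
exfalso.
have exP : exists n, anc par (iter n par x) y.
  have [n hn] := anc_iterE (hroot x); exists n; rewrite hn; exact: hroot.
case: (ex_minnP exP) => k hk hmin.
move: (none (iter k par x)); rewrite /is_apex.
have -> : [forall z in [set x; y], anc par (iter k par x) z].
  apply/forallP => z; apply/implyP; rewrite !inE => /orP [/eqP->|/eqP->] //.
  exact: anc_iter.
rewrite /= => /negP; apply; apply/forallP => c; apply/implyP => /forallP hc.
have hcx := hc x; rewrite !inE eqxx /= in hcx.
have hcy := hc y; rewrite !inE eqxx orbT /= in hcy.
have [m hm] := anc_iterE hcx.
case: (leqP k m) => hkm.
  by rewrite -hm -(subnK hkm) iterD anc_iter.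
have := hmin m; rewrite hm => /(_ hcy); rewrite leqNgt hkm //.
Qed.


Lemma core (t b x y a c1 c2 : V) (r : V) :
  (forall v, anc par r v) -> anc par t b ->
  anc par a x -> anc par a y ->
  (forall z, anc par z x -> anc par z y -> anc par z a) ->
  anc par c2 b -> anc par c2 x -> ~~ anc par c2 y ->
  anc par c1 b -> ~~ anc par c1 t -> (anc par c1 x -> anc par c1 y) ->
  anc par c1 c2 ->
  [/\ a != r, anc par a b & ~~ anc par a t].
Proof.
move=> hroot htb hax hay hap hc2b hc2x hc2y hc1b hc1t hc1l h12.
have hac2 : anc par a c2.
  case/orP: (anc_total hax hc2x) => // h.
  by move: hc2y; rewrite (anc_trans h hay).
have hat : ~~ anc par a t.
  apply/negP => hat.
  case/orP: (anc_total hc1b htb) => h; first by rewrite h in hc1t.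
  have hac1 := anc_trans hat h.
  have hc1x := anc_trans h12 hc2x.
  have hc1a := hap _ hc1x (hc1l hc1x).
  by move: hc1t; rewrite (anc_trans hc1a hat).
split => //; last exact: anc_trans hac2 hc2b.
by apply/eqP => ar; move: hat; rewrite ar hroot.
Qed.

End H.

Theorem lemma9 (V : finType) (par : V -> V) (r : V)
  (L : {set {set V}}) (w : {set V} -> rat) (F : {set {set V}})
  (Fu : {set {set V}}) (u l1 l2 : {set V}) :
  par r = r ->
  (forall v, fconnect par v r) ->
  (forall l, l \in L -> #|l| = 2) ->
  (forall l, l \in L -> (0 < w l)%R) ->
  F \subset L ->
  \bigcup_(l in F) Ppath par r l = tree_edges r ->
  u \in L -> is_uplink par u ->
  is_Fu par r F u Fu ->
  in_Au par r Fu u l1 l2 ->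
  (* e = {apex l2, par (apex l2)}, the last edge of the r-apex(l2) path *)
  apex par r l2 \in Ppath par r u.
Proof.
move=> _ hroot h2 _ FL _ uL /existsP [t /andP [tu /forallP htall]]
  [v _ [FuB covu hmin]] [s [us sFu ss [i hi [hl1 hl2]]]].
have hroot' : forall v, anc par r v by [].
have inFu j : j < size s -> nth set0 s j \in Fu.
  by move=> hj; rewrite -sFu inE mem_nth.
have l1Fu : l1 \in Fu by rewrite -hl1 inFu // ltnW.
have l2Fu : l2 \in Fu by rewrite -hl2 inFu.
have l12 : l1 != l2.
  rewrite -hl1 -hl2 nth_uniq //; first by rewrite (ltn_eqF (ltnSn i)). exact: ltnW.
have hprec : precu par r Fu u l1 l2.
  move: ss hi; rewrite -hl1 -hl2; case: s {us sFu inFu hl1 hl2} => [//|z p] /= /(pathP set0) hp hi.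
  exact: hp.
have hne l : l \in Fu -> exists c, c \in Pul par r Fu u l.
  move=> lFu; have := hmin _ (properD1 lFu); case/subsetPn => c k1 k2.
  by exists c; rewrite /Pul inE k1 andbT k2.
have [c1 hc1] := hne _ l1Fu.
have [c2 hc2] := hne _ l2Fu.
have h12 : anc par c1 c2.
  by move/forallP: hprec => /(_ c1) /implyP /(_ hc1) /forallP /(_ c2) /implyP /(_ hc2) /andP [].
move: hc1 hc2; rewrite /Pul !in_setD => /andP [hc1n hc1u] /andP [hc2n hc2u].
have hc1l2 : c1 \notin Ppath par r l2.
  apply: contra hc1n => h; apply/bigcupP; exists l2 => //; by rewrite !inE eq_sym l12.
have hc2l2 : c2 \in Ppath par r l2.
  move/subsetP: covu => /(_ _ hc2u) /bigcupP [l' l'Fu hl'].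
  case: (l' =P l2) => [<-//|ne]; move: hc2n; case/negP.
  by apply/bigcupP; exists l' => //; rewrite !inE l'Fu andbT; apply/eqP.
have [b [bt uE]] := two_elem (h2 _ uL) tu.
have l2L : l2 \in L.
  by move/subsetP: FuB => /(_ _ l2Fu); rewrite inE => /andP [/(subsetP FL)].
move/eqP/cards2P: (h2 _ l2L) => [x [y [xy l2E]]].
have htb : anc par t b by apply: (implyP (htall b)); rewrite uE !inE eqxx orbT.
have hapex := @apex_spec V par r x y hroot'.
rewrite -l2E in hapex.
move: hapex; rewrite /is_apex => /andP [/forallP hA /forallP hB].
have hax : anc par (apex par r l2) x by have := hA x; rewrite l2E !inE eqxx.
have hay : anc par (apex par r l2) y by have := hA y; rewrite l2E !inE eqxx orbT.
have hap z : anc par z x -> anc par z y -> anc par z (apex par r l2).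
  move=> zx zy; move: (hB z) => /implyP; apply; apply/forallP => q; apply/implyP.
  by rewrite l2E !inE => /orP [/eqP->|/eqP->].
have tb : t != b by rewrite eq_sym.
rewrite /Ppath !inE in hc1u hc2u hc1l2 hc2l2.
rewrite uE cnt2 // in hc1u; rewrite uE cnt2 // in hc2u.
rewrite l2E cnt2 // in hc1l2; rewrite l2E cnt2 // in hc2l2.
rewrite /Ppath inE uE cnt2 //.
move/andP: hc1u => [c1r hc1u]; move/andP: hc2u => [c2r hc2u].
move: hc1l2 hc2l2 => hc1l hc2l.
(* apply core, possibly swapping x and y *)
have main : forall x' y', anc par (apex par r l2) x' -> anc par (apex par r l2) y' ->
  (forall z, anc par z x' -> anc par z y' -> anc par z (apex par r l2)) ->
  anc par c2 x' -> ~~ anc par c2 y' -> (anc par c1 x' -> anc par c1 y') ->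
  (apex par r l2 != r) && (anc par (apex par r l2) t + anc par (apex par r l2) b == 1).
  move=> x' y' k1 k2 k3 k4 k5 k6.
  have hc2t : ~~ anc par c2 t.
    by apply/negP => h; move: hc2u; rewrite h (anc_trans h htb).
  have hc2b : anc par c2 b by move: hc2u; rewrite (negbTE hc2t); case: (anc par c2 b).
  have hc1t : ~~ anc par c1 t.
    by apply/negP => h; move: hc1u; rewrite h (anc_trans h htb).
  have hc1b : anc par c1 b by move: hc1u; rewrite (negbTE hc1t); case: (anc par c1 b).
  have [-> hb ht] := core hroot' htb k1 k2 k3 hc2b k4 k5 hc1b hc1t k6 h12.
  by rewrite hb (negbTE ht).
rewrite c1r /= in hc1l.
move: hc2l => /andP [_]; case hc2x: (anc par c2 x); case hc2y: (anc par c2 y) => //= _.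
- apply: main hax hay hap hc2x _ _; first by rewrite hc2y.
  by move=> h; move: hc1l; rewrite h; case: (anc par c1 y).
- apply: main hay hax _ hc2y _ _; first by move=> z zy zx; exact: hap.
  + by rewrite hc2x.
  by move=> h; move: hc1l; rewrite h; case: (anc par c1 x).
Qed.
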